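(* Let $A\bowtie^{\theta} I$ be an amalgamated Banach algebra as in the context, and assume that $A\bowtie^\theta I$ is commutative, $\sigma(A)\neq\emptyset$, and $\theta(A)I=\{\theta(a)i: a\in A, i\in I\}$ has dense linear span in $I$. Then $$\mathrm{rad}(A\bowtie^{\theta} I)=\{(a,i): a\in\mathrm{rad}\,A,\ i\in\mathrm{rad}\,I\}.$$
   Context: Let $A$ and $B$ be Banach algebras, $\theta:A\to B$ a continuous algebra homomorphism with $\|\theta\|\le 1$, and $I$ a closed two-sided ideal of $B$. The amalgamated Banach algebra $A\bowtie^{\theta} I$ is the Banach space $\{(a,i): a\in A,\ i\in I\}$ with norm $\|(a,i)\|=\|a\|+\|i\|$ and product $(a,i)\cdot(a',i')=(aa',\ \theta(a)i'+i\theta(a')+ii')$. For a commutative Banach algebra $C$, $\sigma(C)$ is the set of nonzero multiplicative linear functionals on $C$, and $\mathrm{rad}\,C=\bigcap_{\chi\in\sigma(C)}\ker\chi$ (equal to $C$ if $\sigma(C)=\emptyset$). *)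

(* Defs.v *)
From Stdlib Require Import Reals List.
Open Scope R_scope.

Record C := Cmk { Cre : R; Cim : R }.
Definition C0 : C := Cmk 0 0.
Definition C1 : C := Cmk 1 0.
Definition Cadd (z w : C) : C := Cmk (Cre z + Cre w) (Cim z + Cim w).
Definition Cmul (z w : C) : C :=
  Cmk (Cre z * Cre w - Cim z * Cim w) (Cre z * Cim w + Cim z * Cre w).
Definition Cnorm (z : C) : R := sqrt (Cre z * Cre z + Cim z * Cim z).

Record BanachAlgebra := {
  car :> Type;
  zero : car;
  add : car -> car -> car;
  opp : car -> car;
  scal : C -> car -> car;
  mul : car -> car -> car;
  norm : car -> R;
  addA : forall x y z, add x (add y z) = add (add x y) z;
  addC : forall x y, add x y = add y x;
  add0 : forall x, add zero x = x;
  addN : forall x, add x (opp x) = zero;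
  scalDr : forall c x y, scal c (add x y) = add (scal c x) (scal c y);
  scalDl : forall c d x, scal (Cadd c d) x = add (scal c x) (scal d x);
  scalA : forall c d x, scal (Cmul c d) x = scal c (scal d x);
  scal1 : forall x, scal C1 x = x;
  mulA : forall x y z, mul x (mul y z) = mul (mul x y) z;
  mulDl : forall x y z, mul (add x y) z = add (mul x z) (mul y z);
  mulDr : forall x y z, mul x (add y z) = add (mul x y) (mul x z);
  scal_mull : forall c x y, scal c (mul x y) = mul (scal c x) y;
  scal_mulr : forall c x y, scal c (mul x y) = mul x (scal c y);
  norm_eq0 : forall x, norm x = 0 -> x = zero;
  normD : forall x y, norm (add x y) <= norm x + norm y;
  normZ : forall c x, norm (scal c x) = Cnorm c * norm x;
  normM : forall x y, norm (mul x y) <= norm x * norm y;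
  complete : forall u : nat -> car,
    (forall eps, 0 < eps -> exists N, forall m n, (N <= m)%nat -> (N <= n)%nat ->
        norm (add (u m) (opp (u n))) < eps) ->
    exists l, forall eps, 0 < eps -> exists N, forall n, (N <= n)%nat ->
        norm (add (u n) (opp l)) < eps
}.

Arguments zero {b}. Arguments add {b}. Arguments opp {b}. Arguments scal {b}.
Arguments mul {b}. Arguments norm {b}.

Definition sub {A : BanachAlgebra} (x y : A) : A := add x (opp y).

Definition contraction_hom (A B : BanachAlgebra) (th : A -> B) : Prop :=
  (forall x y, th (add x y) = add (th x) (th y)) /\
  (forall c x, th (scal c x) = scal c (th x)) /\
  (forall x y, th (mul x y) = mul (th x) (th y)) /\
  (forall x, norm (th x) <= norm x).

Definition closed_ideal (B : BanachAlgebra) (I : B -> Prop) : Prop :=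
  I zero /\
  (forall x y, I x -> I y -> I (add x y)) /\
  (forall c x, I x -> I (scal c x)) /\
  (forall b x, I x -> I (mul b x)) /\
  (forall b x, I x -> I (mul x b)) /\
  (forall (u : nat -> B) l, (forall n, I (u n)) ->
     (forall eps, 0 < eps -> exists N, forall n, (N <= n)%nat -> norm (sub (u n) l) < eps) ->
     I l).

(* ---------- characters and radical of an algebra living on a subset P
   of a carrier T, with given operations (the subset is closed under them) ---------- *)
Definition is_character {T : Type} (P : T -> Prop) (addT : T -> T -> T)
  (scalT : C -> T -> T) (mulT : T -> T -> T) (chi : T -> C) : Prop :=
  (forall x y, P x -> P y -> chi (addT x y) = Cadd (chi x) (chi y)) /\
  (forall c x, P x -> chi (scalT c x) = Cmul c (chi x)) /\
  (forall x y, P x -> P y -> chi (mulT x y) = Cmul (chi x) (chi y)) /\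
  (exists x, P x /\ chi x <> C0).

(* x \in rad = intersection of kernels of all characters (everything if none) *)
Definition in_rad {T : Type} (P : T -> Prop) (addT : T -> T -> T)
  (scalT : C -> T -> T) (mulT : T -> T -> T) (x : T) : Prop :=
  P x /\ forall chi, is_character P addT scalT mulT chi -> chi x = C0.

Definition sigma_nonempty (A : BanachAlgebra) : Prop :=
  exists chi : A -> C, is_character (fun _ => True) add scal mul chi.
Definition radA (A : BanachAlgebra) (a : A) : Prop :=
  in_rad (fun _ => True) add scal mul a.

Definition radI (B : BanachAlgebra) (I : B -> Prop) (i : B) : Prop :=
  in_rad I add scal mul i.

(* ---------- the amalgamated algebra A ⋈^θ I, as the subset A × I of A × B ---------- *)
Definition amal_add {A B : BanachAlgebra} (p q : A * B) : A * B :=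
  (add (fst p) (fst q), add (snd p) (snd q)).
Definition amal_scal {A B : BanachAlgebra} (c : C) (p : A * B) : A * B :=
  (scal c (fst p), scal c (snd p)).
Definition amal_mul {A B : BanachAlgebra} (th : A -> B) (p q : A * B) : A * B :=
  (mul (fst p) (fst q),
   add (add (mul (th (fst p)) (snd q)) (mul (snd p) (th (fst q)))) (mul (snd p) (snd q))).
Definition amal_norm {A B : BanachAlgebra} (p : A * B) : R := norm (fst p) + norm (snd p).

Definition amal_commutative {A B : BanachAlgebra} (th : A -> B) (I : B -> Prop) : Prop :=
  forall p q : A * B, I (snd p) -> I (snd q) -> amal_mul th p q = amal_mul th q p.

Definition rad_amal {A B : BanachAlgebra} (th : A -> B) (I : B -> Prop) (p : A * B) : Prop :=
  in_rad (fun p : A * B => I (snd p)) amal_add amal_scal (amal_mul th) p.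

Fixpoint lin_comb {A B : BanachAlgebra} (th : A -> B) (l : list (C * A * B)) : B :=
  match l with
  | nil => zero
  | (c, a, i) :: l' => add (scal c (mul (th a) i)) (lin_comb th l')
  end.
Definition in_span_thetaAI {A B : BanachAlgebra} (th : A -> B) (I : B -> Prop) (x : B) : Prop :=
  exists l : list (C * A * B), (forall t, In t l -> I (snd t)) /\ x = lin_comb th l.

Definition span_dense_in_I {A B : BanachAlgebra} (th : A -> B) (I : B -> Prop) : Prop :=
  forall i, I i -> forall eps, 0 < eps ->
    exists x, in_span_thetaAI th I x /\ norm (sub i x) < eps.

(* Main.v *)
Require Import Defs.
From Stdlib Require Import Reals List Lra Psatz Classical.
Open Scope R_scope.
Import Defs.

Lemma Cext (z w : Defs.C) : Cre z = Cre w -> Cim z = Cim w -> z = w.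
Proof. destruct z, w; simpl; intros; subst; reflexivity. Qed.

Ltac Cring := apply Cext; simpl; ring.

Lemma Cinv_ex (z : Defs.C) : z <> C0 -> exists w, Cmul w z = C1.
Proof.
  destruct z as [r s]; intro Hz.
  assert (Hd : r * r + s * s <> 0).
  { intro H. apply Hz. assert (r = 0) by nra. assert (s = 0) by nra. subst. reflexivity. }
  exists (Cmk (r / (r*r+s*s)) (- s / (r*r+s*s))).
  unfold Cmul, C1; simpl; f_equal; field; auto.
Qed.

Lemma Cadd_self (z : Defs.C) : Cadd z z = z -> z = C0.
Proof. destruct z; unfold Cadd, C0; simpl; intro H; injection H; intros; f_equal; lra. Qed.

Section Alg.
Variable X : BanachAlgebra.

Lemma self_zero (y : X) : add y y = y -> y = zero.
Proof.
  intro H. transitivity (add (add y y) (opp y)).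
  - rewrite <- addA, addN, addC, add0. reflexivity.
  - rewrite H, addN. reflexivity.
Qed.

Lemma add0r (x : X) : add x zero = x.
Proof. rewrite addC; apply add0. Qed.

Lemma mul0l (x : X) : mul zero x = zero.
Proof. apply self_zero. rewrite <- mulDl, add0. reflexivity. Qed.

Lemma mul0r (x : X) : mul x zero = zero.
Proof. apply self_zero. rewrite <- mulDr, add0. reflexivity. Qed.

Lemma scal0 c : scal c (@zero X) = zero.
Proof. apply self_zero. rewrite <- scalDr, add0. reflexivity. Qed.
End Alg.

Lemma char_or_zero {T : Type} (P : T -> Prop) a s m (chi : T -> C) :
  (forall x y, P x -> P y -> chi (a x y) = Cadd (chi x) (chi y)) ->
  (forall c x, P x -> chi (s c x) = Cmul c (chi x)) ->
  (forall x y, P x -> P y -> chi (m x y) = Cmul (chi x) (chi y)) ->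
  forall x, in_rad P a s m x -> chi x = C0.
Proof.
  intros Ha Hs Hm x [Px Hx].
  destruct (classic (exists y, P y /\ chi y <> C0)) as [E|E].
  - apply Hx. repeat split; auto.
  - destruct (classic (chi x = C0)) as [h|h]; auto. exfalso; apply E; eauto.
Qed.

Theorem theorem5p3 (A B : BanachAlgebra) (th : A -> B) (I : B -> Prop)
  (Hth : contraction_hom A B th) (HI : closed_ideal B I)
  (Hcomm : amal_commutative th I)
  (HsA : sigma_nonempty A)
  (Hdense : span_dense_in_I th I) :
  forall (a : A) (i : B), I i ->
    (rad_amal th I (a, i) <-> (radA A a /\ radI B I i)).
Proof.
  destruct Hth as [thA [thS [thM _]]].
  destruct HI as [I0 [IA [IS [IL [IR _]]]]].
  assert (th0 : th zero = zero).
  { apply self_zero. rewrite <- thA, add0. reflexivity. }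
  assert (commI : forall k l, I k -> I l -> mul k l = mul l k).
  { intros k l Hk Hl. pose proof (f_equal snd (Hcomm (zero, k) (zero, l) Hk Hl)) as E.
    simpl in E. rewrite th0, !mul0l, !mul0r, !add0 in E. exact E. }
  assert (commT : forall x k, I k -> mul (th x) k = mul k (th x)).
  { intros x k Hk. pose proof (f_equal snd (Hcomm (x, zero) (zero, k) I0 Hk)) as E.
    simpl in E. rewrite th0, !mul0l, !mul0r, !add0r, !add0 in E. exact E. }
  intros a i Hi. split.
  - intro H.
    assert (HA : radA A a).
    { split; [exact Logic.I|]. intros phi [pA [pS [pM [x [_ px]]]]].
      destruct H as [_ H].
      apply (H (fun p => phi (fst p))). repeat split.
      + intros; simpl; apply pA; auto.
      + intros; simpl; apply pS; auto.
      + intros; simpl; apply pM; auto.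
      + exists (x, zero); simpl; auto. }
    split; [exact HA|]. split; [exact Hi|].
    intros psi [sA [sS [sM [j [Hj pj]]]]].
    destruct (Cinv_ex _ pj) as [w Hw].
    set (al := fun x => Cmul w (psi (mul (th x) j))).
    assert (F1 : forall x l, I l -> psi (mul (th x) l) = Cmul (al x) (psi l)).
    { intros x l Hl.
      assert (E : Cmul (psi (mul (th x) l)) (psi j) = Cmul (psi (mul (th x) j)) (psi l)).
      { rewrite <- sM, <- sM; auto.
        rewrite <- mulA, (commI l j Hl Hj), !mulA. reflexivity. }
      unfold al.
      transitivity (Cmul w (Cmul (psi (mul (th x) l)) (psi j))).
      { transitivity (Cmul (Cmul w (psi j)) (psi (mul (th x) l))).
        - rewrite Hw. Cring.
        - Cring. }
      rewrite E. Cring. }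
    assert (alM : forall x y, al (mul x y) = Cmul (al x) (al y)).
    { intros x y. unfold al at 1. rewrite thM, <- mulA, F1; auto.
        unfold al. Cring. }
    assert (Hal : al a = C0).
    { apply (char_or_zero (fun _ => True) add scal mul al); auto.
      - intros x y _ _. unfold al. rewrite thA, mulDl, sA; auto. Cring.
      - intros c x _. unfold al. rewrite thS, <- scal_mull, sS; auto. Cring. }
    destruct H as [_ H].
    assert (Hc : Cadd (al a) (psi i) = C0).
    { apply (H (fun p => Cadd (al (fst p)) (psi (snd p)))). repeat split.
      + intros [x k] [y l]; simpl; intros Hk Hl.
        unfold al. rewrite thA, mulDl, !sA; auto. Cring.
      + intros c [x k]; simpl; intros Hk.
        unfold al. rewrite thS, <- scal_mull, !sS; auto. Cring.
      + intros [x k] [y l]; simpl; intros Hk Hl.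
        rewrite !sA; auto.
        rewrite <- (commT y k Hk), !F1, sM, alM; auto. Cring.
      + exists (zero, j); simpl; split; auto.
        unfold al. rewrite th0, mul0l.
        assert (psi zero = C0) as ->.
        { apply Cadd_self. rewrite <- sA, add0; auto. }
        intro E. apply pj. rewrite <- E. Cring. }
    rewrite Hal in Hc. rewrite <- Hc. Cring.
  - intros [HA HR] . split; [exact Hi|]. intros chi [cA [cS [cM _]]].
    assert (E : (a, i) = amal_add (a, zero) (zero, i)).
    { unfold amal_add; simpl. rewrite add0r, add0. reflexivity. }
    rewrite E, cA; simpl; auto.
    assert (Ha : chi (a, zero) = C0).
    { apply (char_or_zero (fun _ => True) add scal mul (fun x => chi (x, zero))); auto.
      - intros x y _ _. rewrite <- cA; simpl; auto.
        unfold amal_add; simpl; rewrite add0; reflexivity.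
      - intros c x _. rewrite <- cS; simpl; auto.
        unfold amal_scal; simpl; rewrite scal0; reflexivity.
      - intros x y _ _. rewrite <- cM; simpl; auto.
        unfold amal_mul; simpl; rewrite !mul0l, !mul0r, !add0; reflexivity. }
    assert (Hb : chi (zero, i) = C0).
    { apply (char_or_zero I add scal mul (fun x => chi (zero, x))); auto.
      - intros x y Hx Hy. rewrite <- cA; simpl; auto.
        unfold amal_add; simpl; rewrite add0; reflexivity.
      - intros c x Hx. rewrite <- cS; simpl; auto.
        unfold amal_scal; simpl; rewrite scal0; reflexivity.
      - intros x y Hx Hy. rewrite <- cM; simpl; auto.
        unfold amal_mul; simpl; rewrite th0, !mul0l, !mul0r, !add0; reflexivity. }
    rewrite Ha, Hb. Cring.
Qed.
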